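(* For any integers $q\ge 2$ and positive integers $w\le n$, there exists a $\mathrm{TOC}_q(n,2,w)$.
   Context: $\mathcal{H}_q(n,w)$ is the set of all words of length $n$ over $\mathbb{Z}_q$ with exactly $w$ nonzero entries, with the Hamming distance. An $(n,d,w)_q$-code is a nonempty subset of $\mathcal{H}_q(n,w)$ in which any two distinct words have Hamming distance at least $d$; $A_q(n,d,w)$ is the maximum size of such a code and a code of this size is optimal. A $\mathrm{TOC}_q(n,d,w)$ (tiling) is a partition of $\mathcal{H}_q(n,w)$ into mutually disjoint optimal $(n,d,w)_q$-codes. *)

(* Defs.v *)
From mathcomp Require Import all_boot.
Set Implicit Arguments. Unset Strict Implicit. Unset Printing Implicit Defensive.

(* Words of length n over Z_q, represented with symbols 'I_q = {0,...,q-1};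
   the zero symbol is the one with value 0. *)
Definition word (q n : nat) := {ffun 'I_n -> 'I_q}.

Definition wt (q n : nat) (x : word q n) : nat := #|[set i | nat_of_ord (x i) != 0]|.

Definition hdist (q n : nat) (x y : word q n) : nat := #|[set i | x i != y i]|.

Definition Hqnw (q n w : nat) : {set word q n} := [set x | wt x == w].

Definition is_code (q n d w : nat) (C : {set word q n}) : bool :=
  [&& C != set0, C \subset Hqnw q n w &
      [forall x in C, forall y in C, (x != y) ==> (d <= hdist x y)]].

Definition Aq (q n d w : nat) : nat :=
  \max_(C : {set word q n} | is_code d w C) #|C|.

Definition optimal_code (q n d w : nat) (C : {set word q n}) : bool :=
  is_code d w C && (#|C| == Aq q n d w).

Definition is_TOC (q n d w : nat) (P : {set {set word q n}}) : bool :=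
  partition P (Hqnw q n w) && [forall C in P, optimal_code d w C].

(* Main.v *)
Require Import Defs.
From mathcomp Require Import all_boot.
From mathcomp Require Import zify.

Section S.
Variables q n w : nat.
Hypothesis q2 : 2 <= q.

Definition gsum (x : word q n) : nat := (\sum_i (nat_of_ord (x i)).-1) %% q.-1.
Definition blk (x : word q n) : {set word q n} := [set y in Hqnw q n w | gsum x == gsum y].

Lemma wtE (x : word q n) : wt x = \sum_i (nat_of_ord (x i) != 0).
Proof.
rewrite /wt -sum1_card big_mkcond /=; apply: eq_bigr => i _; rewrite inE.
by case: ifP.
Qed.

Lemma agree_le1 (y z : word q n) j : (forall i, i != j -> y i = z i) -> hdist y z <= 1.
Proof.
move=> H; rewrite /hdist -(cards1 j); apply: subset_leq_card.
apply/subsetP => i; rewrite !inE; apply: contraR => /H ->; by rewrite eqxx.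
Qed.

Lemma le1_agree (y z : word q n) : y != z -> hdist y z <= 1 ->
  exists j, y j != z j /\ forall i, i != j -> y i = z i.
Proof.
move=> yz /card_le1P H.
have [j Hj] : exists j, y j != z j.
  apply/existsP; apply: contraR yz => /existsPn Hn; apply/eqP/ffunP => i.
  by move: (Hn i); rewrite negbK => /eqP.
exists j; split => // i ij; apply/eqP; apply: contraR ij => Hi.
have Jj : j \in [set i | y i != z i] by rewrite inE.
by move: (H j Jj i); rewrite !inE Hi => <-.
Qed.

Lemma sum_split (x : word q n) j (F : 'I_q -> nat) :
  \sum_i F (x i) = F (x j) + \sum_(i | i != j) F (x i).
Proof. by rewrite (bigD1 j). Qed.

Lemma agree_sum (y z : word q n) j (F : 'I_q -> nat) : (forall i, i != j -> y i = z i) ->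
  \sum_(i | i != j) F (y i) = \sum_(i | i != j) F (z i).
Proof. by move=> H; apply: eq_bigr => i /H ->. Qed.

Lemma blk_code x : x \in Hqnw q n w -> is_code 2 w (blk x).
Proof.
move=> xH; apply/and3P; split.
- by apply/set0Pn; exists x; rewrite inE xH eqxx.
- by apply/subsetP => y; rewrite inE => /andP[].
apply/forallP => y; apply/implyP; rewrite inE => /andP[yH /eqP gy].
apply/forallP => z; apply/implyP; rewrite inE => /andP[zH /eqP gz].
apply/implyP => yz; rewrite ltnNge; apply/negP => /(le1_agree y z yz) [j [yzj H]].
have E1 : \sum_(i | i != j) (nat_of_ord (y i) != 0) = \sum_(i | i != j) (nat_of_ord (z i) != 0).
  by apply: eq_bigr => i /H ->.
have E2 : \sum_(i | i != j) (nat_of_ord (y i)).-1 = \sum_(i | i != j) (nat_of_ord (z i)).-1.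
  by apply: eq_bigr => i /H ->.
move: yH zH; rewrite !inE !wtE (bigD1 j) //= E1 (bigD1 j (P:=predT)) //=.
move=> /eqP <- HW; rewrite eqn_add2r in HW.
move: gz; rewrite gy /gsum (bigD1 j) //= E2 (bigD1 j (P:=predT)) //=.
rewrite ![_ + \sum_(i | _) _]addnC => /eqP; rewrite eqn_modDl.
move: HW yzj (ltn_ord (y j)) (ltn_ord (z j)); rewrite -val_eqE /=.
case: (nat_of_ord (y j)) => [|a]; case: (nat_of_ord (z j)) => [|b] //= _ ab ya zb.
rewrite !modn_small; try lia.
Qed.

Definition jof (y : word q n) := [pick i | nat_of_ord (y i) != 0].

Definition Rb (x y y' : word q n) : bool :=
  [&& y' \in blk x, [forall i, (nat_of_ord (y' i) != 0) == (nat_of_ord (y i) != 0)] &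
      [forall i, (Some i != jof y) ==> (y' i == y i)]].

Lemma jof_some (y : word q n) : 0 < w -> y \in Hqnw q n w -> exists j, jof y = Some j.
Proof.
move=> w0; rewrite inE /wt /jof => /eqP Hw.
case: pickP => [j _|H]; first by exists j.
have : [set i | nat_of_ord (y i) != 0] = set0.
  by apply/setP => i; rewrite !inE H.
by move=> E; rewrite E cards0 in Hw; rewrite -Hw in w0.
Qed.

Lemma Rb_exists x y : 0 < w -> y \in Hqnw q n w -> exists y', Rb x y y'.
Proof.
move=> w0 yH; have [j jE] := jof_some y w0 yH.
have yj : nat_of_ord (y j) != 0 by move: jE; rewrite /jof; case: pickP => // i Hi [<-].
set S' := \sum_(i | i != j) (nat_of_ord (y i)).-1.
set k := (gsum x + (q - 2) * S') %% q.-1.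
have kq : k.+1 < q by have := ltn_pmod (gsum x + (q - 2) * S') (_ : 0 < q.-1); lia.
pose v : 'I_q := Ordinal kq.
pose y' : word q n := [ffun i => if i == j then v else y i].
have supp : forall i, (nat_of_ord (y' i) != 0) = (nat_of_ord (y i) != 0).
  by move=> i; rewrite /y' ffunE; case: (i =P j) => [->|_] /=; rewrite ?yj.
exists y'; apply/and3P; split.
- rewrite inE; apply/andP; split.
    move: yH; rewrite !inE /wt => /eqP <-; apply/eqP; apply: eq_card => i.
    by rewrite !inE supp.
  rewrite {2}/gsum (bigD1 j) //=.
  have -> : \sum_(i | i != j) (nat_of_ord (y' i)).-1 = S'.
    by apply: eq_bigr => i ij; rewrite /y' ffunE (negbTE ij).
  rewrite /y' ffunE eqxx /= /k modnDml.
  have -> : gsum x + (q - 2) * S' + S' = gsum x + S' * q.-1.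
    have -> : q.-1 = (q - 2).+1 by lia.
    by rewrite mulnS; lia.
  by rewrite addnC modnMDl /gsum modn_mod.
- by apply/forallP => i; rewrite supp.
apply/forallP => i; apply/implyP; rewrite jE => ij.
have ij' : i != j by apply: contraNneq ij => ->.
by rewrite /y' ffunE (negbTE ij').
Qed.

Definition fx x (y : word q n) := odflt y [pick y' | Rb x y y'].

Lemma fx_Rb x y : 0 < w -> y \in Hqnw q n w -> Rb x y (fx x y).
Proof.
move=> w0 yH; rewrite /fx; case: pickP => //= H.
by have [y' Hy'] := Rb_exists x y w0 yH; rewrite H in Hy'.
Qed.

Lemma blk_max x (C : {set word q n}) : 0 < w -> is_code 2 w C -> #|C| <= #|blk x|.
Proof.
move=> w0 /and3P [_ CH Cd].
have inj : {in C &, injective (fx x)}.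
  move=> y1 y2 y1C y2C E.
  have y1H := subsetP CH _ y1C; have y2H := subsetP CH _ y2C.
  move: (fx_Rb x y1 w0 y1H) (fx_Rb x y2 w0 y2H); rewrite E.
  move=> /and3P [_ /forallP s1 /forallP a1] /and3P [_ /forallP s2 /forallP a2].
  have jj : jof y1 = jof y2.
    by apply: eq_pick => i /=; move: (s1 i) (s2 i) => /eqP <- /eqP <-.
  have [j jE] := jof_some y1 w0 y1H.
  apply/eqP; apply: contraT => ne.
  have : 2 <= hdist y1 y2.
    by move: Cd => /forallP /(_ y1) /implyP /(_ y1C) /forallP /(_ y2) /implyP /(_ y2C) /implyP /(_ ne).
  rewrite leqNgt; move/negP => Hn; exfalso; apply: Hn; apply: (agree_le1 y1 y2 j) => i ij.
  have ij1 : Some i != jof y1 by rewrite jE; apply: contraNneq ij => -[->].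
  have ij2 : Some i != jof y2 by rewrite -jj.
  by move: (a1 i) (a2 i); rewrite ij1 ij2 /= => /eqP <- /eqP <-.
rewrite -(card_in_imset inj); apply: subset_leq_card; apply/subsetP => z.
case/imsetP => y yC ->.
by have /and3P [] := fx_Rb x y w0 (subsetP CH _ yC).
Qed.

End S.

Theorem theorem3p6 (q n w : nat) :
  2 <= q -> 0 < w -> w <= n ->
  exists P : {set {set word q n}}, is_TOC 2 w P.
Proof.
move=> q2 w0 _.
exists (preim_partition (@gsum q n) (Hqnw q n w)).
apply/andP; split; first exact: preim_partitionP.
apply/forallP => C; apply/implyP => /imsetP [x xH ->].
have cd : is_code 2 w (@blk q n w x) by apply: blk_code.
apply/andP; split => //; apply/eqP/anti_leq/andP; split.
  by apply: (leq_bigmax_cond (F := fun C0 : {set word q n} => #|C0|)); exact: cd.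
by apply/bigmax_leqP => C' HC'; apply: blk_max.
Qed.
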